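(* Let $f$ be a probability density on $(x_i,x_f)$, $-\infty<x_i<x_f\le\infty$, differentiable with $f'(x)<0$ on $(x_i,x_f)$, and let $\kappa>0$. If $\alpha\in\mathbb{R}\setminus\{2\}$, then $\mathcal{D}_\alpha[f^{[\kappa]}](s)=\big(\mathcal{D}_\alpha[f]\big)^{[\kappa^{\alpha-2}]}(s)$. If $\alpha=2$, then $\mathcal{D}_2[f^{[\kappa]}](s)=\mathcal{D}_2[f](s+\ln\kappa)$.
   Context: For $\kappa>0$ and a function $h$, $h^{[\kappa]}(x)=\kappa\,h(\kappa x)$. Down transform: for a density $f$ on $(x_i,x_f)$ with $f'<0$ and $\alpha\in\mathbb{R}$, $\mathcal{D}_\alpha[f](s)=f(x(s))^\alpha\,|f'(x(s))|^{-1}$, where $x(s)$ is the inverse of the change of variable $s(x)=f(x)^{2-\alpha}/(\alpha-2)$ if $\alpha\neq2$, and $s(x)=-\ln f(x)$ if $\alpha=2$ (in both cases $s'(x)=f^{1-\alpha}(x)|f'(x)|$). *)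

(* Defs.v *)
From HB Require Import structures.
From mathcomp Require Import all_boot all_order all_algebra.
From mathcomp Require Import all_classical all_reals all_analysis.
Set Implicit Arguments. Unset Strict Implicit. Unset Printing Implicit Defensive.
Import Order.TTheory GRing.Theory Num.Theory.
Import numFieldNormedType.Exports.
Local Open Scope classical_set_scope.
Local Open Scope ring_scope.

Definition openItv {R : realType} (xi : R) (xf : \bar R) : set R :=
  [set x | (xi%:E < x%:E)%E /\ (x%:E < xf)%E].

Definition rescale {R : realType} (k : R) (h : R -> R) : R -> R :=
  fun x => k * h (k * x).

Definition rescaleDom {R : realType} (k : R) (D : set R) : set R :=
  [set x | D (k * x)].

Definition sVar {R : realType} (alpha : R) (f : R -> R) (x : R) : R :=
  if alpha == 2 then - ln (f x) else f x `^ (2 - alpha) / (alpha - 2).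

(* x(s): the (unique, as s is strictly monotone) point of D with s(x) = s. *)
Definition xOfS {R : realType} (D : set R) (alpha : R) (f : R -> R) (s : R) : R :=
  get [set x | D x /\ sVar alpha f x = s].

Definition downT {R : realType} (D : set R) (alpha : R) (f : R -> R) (s : R) : R :=
  let x := xOfS D alpha f s in f x `^ alpha / `| derive1 f x |.

Definition downDom {R : realType} (D : set R) (alpha : R) (f : R -> R) : set R :=
  [set s | exists2 x, D x & sVar alpha f x = s].

(* Main.v *)
Require Import Defs.
From HB Require Import structures.
From mathcomp Require Import all_boot all_order all_algebra.
From mathcomp Require Import all_classical all_reals all_analysis.
Import Order.TTheory GRing.Theory Num.Theory.
Import numFieldNormedType.Exports.
Local Open Scope classical_set_scope.
Local Open Scope ring_scope.
From mathcomp Require Import ring lra.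
Local Open Scope ring_scope.
Section S.
Variables (R : realType) (xi : R) (xf : \bar R) (f : R -> R).
Hypothesis fd : forall x, openItv xi xf x -> derivable f x 1.
Hypothesis fneg : forall x, openItv xi xf x -> derive1 f x < 0.

Lemma sdecr x y : openItv xi xf x -> openItv xi xf y -> x < y -> f y < f x.
Proof.
move=> [Hx1 Hx2] [Hy1 Hy2] xy.
have sub : forall z, z \in `[x, y]%R -> openItv xi xf z.
  move=> z; rewrite in_itv /= => /andP[h1 h2]; split.
    by apply: (lt_le_trans Hx1); rewrite lee_fin.
  by apply: (le_lt_trans _ Hy2); rewrite lee_fin.
have [c cin E] : exists2 c, c \in `]x, y[%R & f y - f x = derive1 f c * (y - x).
  apply: MVT => //.
  - move=> z zin; have dz : derivable f z 1 by apply: fd; apply: sub; apply: subset_itv_oo_cc.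
    by rewrite derive1E; apply: derivableP.
  - by apply: derivable_within_continuous => z /sub; apply: fd.
rewrite -subr_lt0 E pmulr_llt0 ?subr_gt0 //.
by apply: fneg; apply: sub; apply: subset_itv_oo_cc.
Qed.
Hypothesis fge0 : forall x, openItv xi xf x -> 0 <= f x.

Lemma fpos x : openItv xi xf x -> 0 < f x.
Proof.
move=> Dx; have [y Dy xy] : exists2 y, openItv xi xf y & x < y.
  case: Dx; case: xf => [r| |] H1 H2.
  - exists ((x + r) / 2); last by move: H2; rewrite lte_fin => ?; lra.
    move: H1 H2; rewrite /openItv !lte_fin => ? ?; split; rewrite lte_fin; lra.
  - exists (x + 1); last lra.
    by split; rewrite ?ltry // lte_fin; move: H1; rewrite lte_fin => ?; lra.
  - by move: H2; rewrite ltNge leNye.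
exact: (le_lt_trans (fge0 _ Dy) (sdecr _ _ Dx Dy xy)).
Qed.

Lemma finj x y : openItv xi xf x -> openItv xi xf y -> f x = f y -> x = y.
Proof.
move=> Dx Dy E; case: (ltgtP x y) => // h.
- by move: (sdecr _ _ Dx Dy h); rewrite E ltxx.
- by move: (sdecr _ _ Dy Dx h); rewrite E ltxx.
Qed.
End S.
Lemma dres (R : realType) (k : R) (f : R -> R) x :
  derivable f (k * x) 1 -> derive1 (rescale k f) x = k * (k * derive1 f (k * x)).
Proof.
move=> df.
have hk : derivable (fun x : R => k * x) x 1.
  by apply/derivable1_diffP; apply: differentiableM.
have hc : derivable (f \o (fun x => k * x)) x 1.
  by apply/derivable1_diffP; apply: differentiable_comp; apply/derivable1_diffP.
rewrite /rescale.
rewrite (derive1Ml (f := f \o (fun x => k * x))) //.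
rewrite derive1_comp //.
rewrite (derive1Ml (f := id)) ?derive1_id ?mulr1; last exact: derivable_id.
by rewrite [_ * k]mulrC.
Qed.
Theorem proposition1 (R : realType) (xi : R) (xf : \bar R) (f : R -> R) (k alpha : R) :
  (xi%:E < xf)%E ->
  (forall x, openItv xi xf x -> 0 <= f x) ->
  (\int[lebesgue_measure]_(x in openItv xi xf) (f x)%:E = 1)%E ->
  (forall x, openItv xi xf x -> derivable f x 1) ->
  (forall x, openItv xi xf x -> derive1 f x < 0) ->
  0 < k ->
  (alpha != 2 ->
     forall s, downDom (rescaleDom k (openItv xi xf)) alpha (rescale k f) s ->
       downT (rescaleDom k (openItv xi xf)) alpha (rescale k f) s
       = rescale (k `^ (alpha - 2)) (downT (openItv xi xf) alpha f) s) /\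
  (alpha = 2 ->
     forall s, downDom (rescaleDom k (openItv xi xf)) 2 (rescale k f) s ->
       downT (rescaleDom k (openItv xi xf)) 2 (rescale k f) s
       = downT (openItv xi xf) 2 f (s + ln k)).
Proof.
move=> _ fge0 _ fd fneg k0.
set D := openItv xi xf.
have fp x : D x -> 0 < f x by move=> Dx; exact: (@fpos R xi xf f fd fneg fge0 x Dx).
have fi := @finj R xi xf f fd fneg.
have dres' x : D (k * x) -> derive1 (rescale k f) x = k * (k * derive1 f (k * x)).
  by move=> Dx; apply: dres; apply: fd.
have kne0 : k != 0 by rewrite gt_eqF.
have fdne0 x : D x -> `|derive1 f x| != 0.
  by move=> Dx; rewrite normr_eq0 lt_eqF // fneg.
split.
- move=> a2 s [x0 Dx0 Hs].
  have key x : D (k * x) -> sVar alpha (rescale k f) x = k `^ (2 - alpha) * sVar alpha f (k * x).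
    by move=> Dx; rewrite /sVar (negbTE a2) /rescale powRM ?ltW ?fp // mulrA.
  have a2' : alpha - 2 != 0 by rewrite subr_eq0.
  have a2'' : 2 - alpha != 0 by rewrite subr_eq0 eq_sym.
  have sinj y z : D y -> D z -> sVar alpha f y = sVar alpha f z -> y = z.
    move=> Dy Dz; rewrite /sVar (negbTE a2) => E.
    have E2 : f y `^ (2 - alpha) = f z `^ (2 - alpha).
      by have := congr1 (fun t => t * (alpha - 2)) E; rewrite /= !divfK.
    have E3 := congr1 (@ln R) E2; rewrite !ln_powR in E3.
    apply: fi => //; apply: ln_inj; rewrite ?posrE ?fp //.
    exact: (mulfI a2'' E3).
  have kc : k `^ (alpha - 2) * k `^ (2 - alpha) = 1.
    rewrite -powRD; last by rewrite kne0 implybT.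
    by rewrite (_ : alpha - 2 + (2 - alpha) = 0) ?powRr0 // addrC subrKA subrr.
  have ex1 : xOfS (rescaleDom k D) alpha (rescale k f) s = x0.
    have := @getPex R [set x | rescaleDom k D x /\ sVar alpha (rescale k f) x = s]
      (ex_intro _ x0 (conj Dx0 Hs)).
    rewrite /xOfS; set x1 := get _ => -[Dx1 Hx1].
    apply: (mulfI kne0); apply: sinj => //.
    rewrite key // in Hx1; rewrite key // in Hs.
    have hne : k `^ (2 - alpha) != 0 by rewrite gt_eqF ?powR_gt0.
    by apply: (mulfI hne); rewrite Hx1 Hs.
  have ex2 : xOfS D alpha f (k `^ (alpha - 2) * s) = k * x0.
    have Hs' : sVar alpha f (k * x0) = k `^ (alpha - 2) * s.
      by rewrite -Hs key // mulrA kc mul1r.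
    have := @getPex R [set x | D x /\ sVar alpha f x = k `^ (alpha - 2) * s]
      (ex_intro _ (k * x0) (conj Dx0 Hs')).
    rewrite /xOfS; set x1 := get _ => -[Dx1 Hx1].
    by apply: sinj => //; rewrite Hx1 Hs'.
  rewrite /downT ex1 /rescale ex2 (dres' x0 Dx0) powRM ?ltW ?fp //.
  have ka : k `^ alpha = k `^ (alpha - 2) * (k * k).
    rewrite -expr2 -powR_mulrn ?ltW // -powRD; last by rewrite kne0 implybT.
    by rewrite subrK.
  rewrite ka !normrM (gtr0_norm k0).
  have := fdne0 _ Dx0; set d := `|_|; move=> dne0.
  by field; rewrite kne0 dne0.
- move=> _ s [x0 Dx0 Hs].
  have key x : D (k * x) -> sVar 2 (rescale k f) x = sVar 2 f (k * x) - ln k.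
    move=> Dx; rewrite /sVar eqxx /rescale lnM ?posrE ?fp //.
    by rewrite opprD addrC.
  have sinj y z : D y -> D z -> sVar 2 f y = sVar 2 f z -> y = z.
    move=> Dy Dz; rewrite /sVar eqxx => /oppr_inj E.
    by apply: fi => //; apply: ln_inj; rewrite ?posrE ?fp.
  have ex1 : xOfS (rescaleDom k D) 2 (rescale k f) s = x0.
    have := @getPex R [set x | rescaleDom k D x /\ sVar 2 (rescale k f) x = s]
      (ex_intro _ x0 (conj Dx0 Hs)).
    rewrite /xOfS; set x1 := get _ => -[Dx1 Hx1].
    apply: (mulfI kne0); apply: sinj => //.
    rewrite key // in Hx1; rewrite key // in Hs.
    by apply: (addIr (- ln k)); rewrite Hx1 Hs.
  have ex2 : xOfS D 2 f (s + ln k) = k * x0.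
    have Hs' : sVar 2 f (k * x0) = s + ln k.
      by rewrite -Hs key // subrK.
    have := @getPex R [set x | D x /\ sVar 2 f x = s + ln k]
      (ex_intro _ (k * x0) (conj Dx0 Hs')).
    rewrite /xOfS; set x1 := get _ => -[Dx1 Hx1].
    by apply: sinj => //; rewrite Hx1 Hs'.
  rewrite /downT ex1 ex2 (dres' x0 Dx0) powRM ?ltW ?fp //.
  rewrite powR_mulrn ?ltW // expr2 !normrM (gtr0_norm k0).
  have := fdne0 _ Dx0; set d := `|_|; move=> dne0.
  by field; rewrite kne0 dne0.
Qed.
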